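(* Let $t\in\mathbb{N}_{>0}$ be a time parameter. (1) There exists a deterministic neural timer network with time parameter $t$ that uses $O(\log t)$ deterministic threshold gates. (2) Every deterministic neural timer network with time parameter $t$ requires $\Omega(\log t)$ neurons.
   Context: A neural network consists of input neurons (no incoming edges), output neurons and auxiliary neurons, connected by directed weighted edges with weights $w(u,v)\in\mathbb{R}$ ($w(u,v)=0$ means no edge; self-loops are allowed); every neuron $v$ has a threshold $b(v)\ge 0$, and every neuron is either excitatory (all outgoing weights $\ge 0$) or inhibitory (all outgoing weights $\le 0$). The network evolves in discrete synchronous rounds; $u^\tau\in\{0,1\}$ indicates whether $u$ fires in round $\tau$, the firing of input neurons is given externally, and for a non-input neuron $u$ the potential is $\mathrm{pot}(u,\tau)=\sum_v w(v,u)\,v^{\tau-1}-b(u)$. A deterministic threshold gate fires in round $\tau$ iff $\mathrm{pot}(u,\tau)\ge 0$. Neurons have no memory beyond this rule. The size of a network is measured by its number of auxiliary neurons. A deterministic neural timer with time parameter $t$ is a network of deterministic threshold gates with one input neuron $x$, one output neuron $y$ and auxiliary neurons, such that in every round $\tau$, $y^\tau=1$ iff there exists a round $\tau'$ with $\tau-t\le\tau'<\tau$ and $x^{\tau'}=1$. *)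

(* Defs.v *)
From Stdlib Require Import Reals List Arith.
Import ListNotations.
Open Scope R_scope.

Inductive neuron : Type :=
  | NX : neuron
  | NY : neuron
  | Aux : nat -> neuron.

(* Weights/thresholds of Aux i for
   i >= aux_count are irrelevant (those neurons do not exist). *)
Record network : Type := mkNetwork {
  aux_count : nat;
  weight : neuron -> neuron -> R;   (* weight u v = w(u,v), edge u -> v *)
  thresh : neuron -> R
}.

Definition neurons (N : network) : list neuron :=
  NX :: NY :: map Aux (seq 0 (aux_count N)).

Definition is_neuron (N : network) (u : neuron) : Prop :=
  match u with NX => True | NY => True | Aux i => (i < aux_count N)%nat end.

Definition well_formed (N : network) : Prop :=
  (forall u, is_neuron N u -> weight N u NX = 0) /\
  (forall v, is_neuron N v -> 0 <= thresh N v) /\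
  (forall u, is_neuron N u ->
     (forall v, is_neuron N v -> 0 <= weight N u v) \/
     (forall v, is_neuron N v -> weight N u v <= 0)).

Definition b2R (b : bool) : R := if b then 1 else 0.

Fixpoint state (N : network) (xs : nat -> bool) (tau : nat) (v : neuron) : bool :=
  match tau with
  | O => match v with NX => xs O | _ => false end
  | S tau' =>
      match v with
      | NX => xs (S tau')
      | _ =>
        if Rle_dec 0
             (fold_right Rplus 0
                (map (fun u => weight N u v * b2R (state N xs tau' u)) (neurons N))
              - thresh N v)
        then true else false
      end
  end.

Definition is_timer (N : network) (t : nat) : Prop :=
  well_formed N /\
  forall (xs : nat -> bool) (tau : nat),
    state N xs tau NY = true <->
    exists tau', (tau - t <= tau')%nat /\ (tau' < tau)%nat /\ xs tau' = true.

(* Main.v *)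
Require Import Defs.
From Stdlib Require Import Reals Lra Lia Arith List Bool.
Import ListNotations.
Open Scope R_scope.

Fixpoint rsum (f : nat -> R) (n : nat) : R :=
  match n with O => 0 | S n' => rsum f n' + f n' end.

Lemma rsum_ext f g n : (forall i, (i < n)%nat -> f i = g i) -> rsum f n = rsum g n.
Proof. induction n; intros H; simpl; auto. rewrite IHn by (intros; apply H; lia). rewrite H by lia. auto. Qed.

Lemma rsum_plus f g n : rsum (fun i => f i + g i) n = rsum f n + rsum g n.
Proof. induction n; simpl; [lra|]. rewrite IHn; lra. Qed.

Lemma rsum_0 n : rsum (fun _ => 0) n = 0.
Proof. induction n; simpl; [lra|]. rewrite IHn; lra. Qed.

Lemma rsum_front f n : rsum f (S n) = f O + rsum (fun i => f (S i)) n.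
Proof. induction n; simpl in *; [lra|]. rewrite IHn. lra. Qed.

Lemma rsum_pt a c n : (a < n)%nat -> rsum (fun j => if Nat.eqb j a then c else 0) n = c.
Proof.
  induction n; intros H; [lia|]. simpl.
  destruct (Nat.eqb_spec n a).
  - subst. rewrite (rsum_ext _ (fun _ => 0)). rewrite rsum_0; lra.
    intros i Hi. destruct (Nat.eqb_spec i a); [lia|auto].
  - rewrite IHn by lia. lra.
Qed.

Lemma fold_seq (h : nat -> R) s n :
  fold_right Rplus 0 (map h (seq s n)) = rsum (fun i => h (s + i)%nat) n.
Proof.
  revert s; induction n; intros s; [reflexivity|].
  cbn [seq map fold_right]. rewrite IHn. rewrite rsum_front. rewrite Nat.add_0_r.
  rewrite (rsum_ext (fun i => h (S s + i)%nat) (fun i => h (s + S i)%nat)); [lra|].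
  intros; f_equal; lia.
Qed.

Lemma pot_decomp N (st : neuron -> bool) v :
  fold_right Rplus 0 (map (fun u => weight N u v * b2R (st u)) (neurons N)) =
  weight N NX v * b2R (st NX) + weight N NY v * b2R (st NY) +
  rsum (fun i => weight N (Aux i) v * b2R (st (Aux i))) (aux_count N).
Proof.
  unfold neurons. simpl. rewrite map_map. rewrite fold_seq. simpl. lra.
Qed.

Lemma rsum_blocks F p :
  rsum F (4 + 4 * p) = F 0%nat + F 1%nat + F 2%nat + F 3%nat +
    rsum (fun j => F (4 + 4 * j)%nat + F (5 + 4 * j)%nat + F (6 + 4 * j)%nat + F (7 + 4*j)%nat) p.
Proof.
  induction p.
  - simpl. lra.
  - replace (4 + 4 * S p)%nat with (S (S (S (S (4 + 4 * p))))) by lia.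
    change (rsum F (S (S (S (S (4 + 4 * p)))))) with
      (rsum F (4 + 4 * p) + F (4 + 4 * p)%nat + F (S (4 + 4 * p)) + F (S (S (4 + 4 * p)))
       + F (S (S (S (4 + 4 * p))))).
    rewrite IHp. cbn [rsum].
    replace (S (4 + 4 * p)) with (5 + 4 * p)%nat by lia.
    replace (S (5 + 4 * p)) with (6 + 4 * p)%nat by lia.
    replace (S (6 + 4 * p)) with (7 + 4 * p)%nat by lia.
    lra.
Qed.

Lemma state_NX N xs s : state N xs s NX = xs s.
Proof. destruct s; reflexivity. Qed.

Lemma state_S N xs s v : v <> NX ->
  state N xs (S s) v = if Rle_dec 0
             (fold_right Rplus 0
                (map (fun u => weight N u v * b2R (state N xs s u)) (neurons N))
              - thresh N v) then true else false.
Proof. destruct v; [congruence|reflexivity|reflexivity]. Qed.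

Inductive role := RA | RE | RR | RS | RBP (j:nat) | RBN (j:nat) | RHP (j:nat) | RHQ (j:nat).

Fixpoint blk (i j : nat) : role :=
  match i with
  | O => RBP j | 1 => RBN j | 2 => RHP j | 3 => RHQ j
  | S (S (S (S i'))) => blk i' (S j) end.

Definition role_of (i : nat) : role :=
  match i with
  | O => RA | 1 => RE | 2 => RR | 3 => RS
  | S (S (S (S i'))) => blk i' O end.

Lemma blk_shift p c j : blk (4 * p + c) j = blk c (p + j).
Proof.
  revert j; induction p; intros j; [reflexivity|].
  replace (4 * S p + c)%nat with (S (S (S (S (4 * p + c)))))%nat by lia.
  cbn [blk]. rewrite IHp. f_equal; lia.
Qed.

Definition iB (c j : nat) : nat := (4 + (4 * j + c))%nat.

Lemma role_iB c j : role_of (iB c j) = blk c j.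
Proof. unfold iB. transitivity (blk (4 * j + c) O); [reflexivity|].
  rewrite blk_shift, Nat.add_0_r. reflexivity. Qed.

Definition wr (m : nat) (src tgt : role) : R :=
  match tgt with
  | RA => match src with RA => 1 | RE => 2 | RS => -1 | _ => 0 end
  | RE => 0 | RR => 0
  | RS => match src with RR => - (2 ^ m) | RBP j => if Nat.ltb j m then 2 ^ j else 0 | _ => 0 end
  | RBP O | RBN O => match src with RR => -1 | RBN O => -1 | _ => 0 end
  | RBN (S _) => 0
  | RBP j' => if Nat.ltb j' m then
        match src with
        | RR => -3
        | RBP j => if Nat.eqb j j' then 1 else 0
        | RHP j => if Nat.eqb j j' then 1 else 0
        | RHQ j => if Nat.eqb j (S j') then -2 else 0
        | _ => 0 end
      else 0
  | RHP i | RHQ i => if andb (Nat.leb 1 i) (Nat.leb i m) then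
        match src with
        | RR => -1 | RBN O => -1
        | RBP j => if andb (Nat.leb 1 j) (Nat.ltb j i) then 1 else 0
        | _ => 0 end
      else 0
  end.

Definition wx (tgt : role) : R :=
  match tgt with RA => 2 | RE => 1 | RR => 1 | _ => 0 end.

Definition th (K : nat) (tgt : role) : R :=
  match tgt with
  | RA | RE | RR => 1
  | RS => INR K
  | RBP O | RBN O => 0
  | RBP _ | RBN _ => 1
  | RHP i | RHQ i => INR (i - 1)
  end.

Definition wt (m : nat) (u v : neuron) : R :=
  match v with
  | NX => 0
  | NY => match u with NX => 1 | Aux i => match role_of i with RA => 1 | _ => 0 end | NY => 0 end
  | Aux k => match u with NX => wx (role_of k) | NY => 0 | Aux i => wr m (role_of i) (role_of k) end
  end.

Definition tht (K : nat) (v : neuron) : R :=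
  match v with NX => 0 | NY => 1 | Aux k => th K (role_of k) end.

Definition net (m K : nat) : network := mkNetwork (4 + 4 * S m) (wt m) (tht K).

Lemma pow2_pos j : 0 < 2 ^ j.
Proof. apply pow_lt; lra. Qed.

Lemma net_wf m K : well_formed (net m K).
Proof.
  split; [|split].
  - intros u _. destruct u; reflexivity.
  - intros v _. destruct v as [| |k]; simpl; try lra.
    destruct (role_of k) as [| | | |j|j|j|j]; simpl; try lra; try apply pos_INR;
    destruct j; lra.
  - intros u _. destruct u as [| |i].
    + left. intros v _. destruct v as [| |k]; simpl; try lra.
      destruct (role_of k); simpl; lra.
    + left. intros v _. destruct v; simpl; lra.
    + destruct (role_of i) as [| | | |j|j|j|j] eqn:Hr;
      [left|left|right|right|left|right|left|right]; intros v _;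
      destruct v as [| |k]; simpl; rewrite ?Hr; try lra;
      destruct (role_of k) as [| | | |j'|j'|j'|j']; simpl; try lra;
      repeat match goal with
             | |- context [if ?b then _ else _] => destruct b
             | |- context [match ?n with O => _ | S _ => _ end] => destruct n
             end; try lra; try (left; apply pow2_pos); try (apply Rlt_le, pow2_pos);
      try (apply Ropp_le_0 ; apply Rlt_le, pow2_pos); try (generalize (pow2_pos m); lra).
Qed.

Definition st m K xs s i := state (net m K) xs s (Aux i).
Definition sv m K xs s i := b2R (st m K xs s i).

Definition blocksum m K xs s (r : role) :=
  rsum (fun j => wr m (RBP j) r * sv m K xs s (iB 0 j) + wr m (RBN j) r * sv m K xs s (iB 1 j)
               + wr m (RHP j) r * sv m K xs s (iB 2 j) + wr m (RHQ j) r * sv m K xs s (iB 3 j)) (S m).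

Lemma fire m K xs s k : st m K xs (S s) k = true <->
  0 <= wx (role_of k) * b2R (xs s) + (wr m RA (role_of k) * sv m K xs s 0 + wr m RE (role_of k) * sv m K xs s 1
     + wr m RR (role_of k) * sv m K xs s 2 + wr m RS (role_of k) * sv m K xs s 3)
     + blocksum m K xs s (role_of k) - th K (role_of k).
Proof.
  unfold st. rewrite state_S by discriminate. rewrite pot_decomp.
  cbn [aux_count net]. rewrite rsum_blocks. rewrite state_NX.
  unfold blocksum.
  rewrite (rsum_ext _ (fun j => wr m (RBP j) (role_of k) * sv m K xs s (iB 0 j) + wr m (RBN j) (role_of k) * sv m K xs s (iB 1 j)
               + wr m (RHP j) (role_of k) * sv m K xs s (iB 2 j) + wr m (RHQ j) (role_of k) * sv m K xs s (iB 3 j))).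
  2:{ intros j _. unfold sv, st. cbn [weight net wt]. 
      replace (4 + 4 * j)%nat with (iB 0 j) by (unfold iB; lia).
      replace (5 + 4 * j)%nat with (iB 1 j) by (unfold iB; lia).
      replace (6 + 4 * j)%nat with (iB 2 j) by (unfold iB; lia).
      replace (7 + 4 * j)%nat with (iB 3 j) by (unfold iB; lia).
      rewrite !role_iB. reflexivity. }
  cbn [weight net wt tht thresh]. unfold sv, st. cbn [role_of].
  destruct (Rle_dec _ _) as [H|H]; split; intros H'; try discriminate; try reflexivity; lra.
Qed.

Lemma b2R_01 b : 0 <= b2R b <= 1.
Proof. destruct b; simpl; lra. Qed.

Ltac bz := unfold blocksum; rewrite (rsum_ext _ (fun _ => 0)) by (intros; cbn [wr]; ring); rewrite rsum_0.

Lemma stepA m K xs s : st m K xs (S s) 0 = xs s || st m K xs s 1 || (st m K xs s 0 && negb (st m K xs s 3)).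
Proof.
  apply eq_iff_eq_true. rewrite fire. cbn [role_of wr wx th]. bz. unfold sv.
  destruct (xs s), (st m K xs s 1), (st m K xs s 0), (st m K xs s 3); simpl; split; intros; try lra; try discriminate.
Qed.

Lemma stepE m K xs s : st m K xs (S s) 1 = xs s.
Proof.
  apply eq_iff_eq_true. rewrite fire. cbn [role_of wr wx th]. bz. unfold sv.
  destruct (xs s); simpl; split; intros; try lra; try discriminate.
Qed.

Lemma stepR m K xs s : st m K xs (S s) 2 = xs s.
Proof.
  apply eq_iff_eq_true. rewrite fire. cbn [role_of wr wx th]. bz. unfold sv.
  destruct (xs s); simpl; split; intros; try lra; try discriminate.
Qed.

Lemma stepY m K xs s : state (net m K) xs (S s) NY = xs s || st m K xs s 0.
Proof.
  rewrite state_S by discriminate. rewrite pot_decomp.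
  cbn [aux_count net]. rewrite rsum_blocks. rewrite state_NX.
  rewrite (rsum_ext _ (fun _ => 0)).
  2:{ intros j _. cbn [weight net wt].
      replace (4 + 4 * j)%nat with (iB 0 j) by (unfold iB; lia).
      replace (5 + 4 * j)%nat with (iB 1 j) by (unfold iB; lia).
      replace (6 + 4 * j)%nat with (iB 2 j) by (unfold iB; lia).
      replace (7 + 4 * j)%nat with (iB 3 j) by (unfold iB; lia).
      rewrite !role_iB. cbn [blk]. ring. }
  rewrite rsum_0. cbn [weight net wt tht thresh role_of]. unfold st.
  destruct (xs s), (state (net m K) xs s (Aux 0)); simpl;
  destruct (Rle_dec _ _); try reflexivity; lra.
Qed.

Definition val (m : nat) (f : nat -> bool) := rsum (fun j => 2 ^ j * b2R (f j)) m.

Lemma stepS m K xs s : st m K xs (S s) 3 = true <->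
  0 <= val m (fun j => st m K xs s (iB 0 j)) - 2 ^ m * sv m K xs s 2 - INR K.
Proof.
  rewrite fire. cbn [role_of wr wx th].
  assert (blocksum m K xs s RS = val m (fun j => st m K xs s (iB 0 j))) as ->.
  { unfold blocksum, val. cbn [rsum]. cbn [wr].
    rewrite Nat.ltb_irrefl.
    rewrite (rsum_ext _ (fun j => 2 ^ j * b2R (st m K xs s (iB 0 j)))). unfold sv; ring.
    intros j Hj. rewrite (proj2 (Nat.ltb_lt _ _) Hj). unfold sv. ring. }
  split; intros; lra.
Qed.

Lemma stepB0 m K xs s c : (c < 2)%nat ->
  st m K xs (S s) (iB c 0) = negb (st m K xs s (iB 1 0)) && negb (st m K xs s 2).
Proof.
  intros Hc.
  apply eq_iff_eq_true. rewrite fire. rewrite role_iB.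
  assert (blocksum m K xs s (blk c 0) = - sv m K xs s (iB 1 0)) as ->.
  { unfold blocksum. rewrite (rsum_ext _ (fun j => if Nat.eqb j 0 then - sv m K xs s (iB 1 0) else 0)).
    rewrite rsum_pt; [ring|lia].
    intros j _. destruct c as [|[|]]; [| |lia]; destruct j; cbn [blk wr Nat.eqb]; ring. }
  assert (blk c 0 = RBP 0 \/ blk c 0 = RBN 0) as Hb by (destruct c as [|[|]]; [left|right|lia]; reflexivity).
  unfold sv.
  destruct Hb as [-> | ->]; cbn [wr wx th];
  destruct (xs s), (st m K xs s 2), (st m K xs s (iB 1 0)), (st m K xs s 0), (st m K xs s 1), (st m K xs s 3);
  simpl; split; intros; try lra; try discriminate.
Qed.

Lemma stepBj m K xs s j0 : (1 <= j0 < m)%nat ->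
  st m K xs (S s) (iB 0 j0) = negb (st m K xs s 2) && negb (st m K xs s (iB 3 (S j0)))
                             && (st m K xs s (iB 0 j0) || st m K xs s (iB 2 j0)).
Proof.
  intros Hj.
  apply eq_iff_eq_true. rewrite fire. rewrite role_iB. cbn [blk].
  assert (Hl : Nat.ltb j0 m = true) by (apply Nat.ltb_lt; lia).
  assert (blocksum m K xs s (RBP j0) = sv m K xs s (iB 0 j0) + sv m K xs s (iB 2 j0) - 2 * sv m K xs s (iB 3 (S j0))) as ->.
  { unfold blocksum.
    rewrite (rsum_ext _ (fun j => (if Nat.eqb j j0 then sv m K xs s (iB 0 j0) + sv m K xs s (iB 2 j0) else 0)
                            + (if Nat.eqb j (S j0) then -2 * sv m K xs s (iB 3 (S j0)) else 0))).
    rewrite rsum_plus, !rsum_pt by lia. ring.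
    intros j _. destruct j0 as [|j0']; [lia|]. cbn [wr]. rewrite Hl.
    destruct (Nat.eqb j (S j0')) eqn:E1; destruct (Nat.eqb j (S (S j0'))) eqn:E2;
    try (apply Nat.eqb_eq in E1); try (apply Nat.eqb_eq in E2); subst; try lia; ring. }
  destruct j0 as [|j0']; [lia|]. cbn [wr wx th]. rewrite Hl. unfold sv.
  destruct (xs s), (st m K xs s 2), (st m K xs s (iB 3 (S (S j0')))), (st m K xs s (iB 0 (S j0'))),
    (st m K xs s (iB 2 (S j0'))), (st m K xs s 0), (st m K xs s 1), (st m K xs s 3);
  simpl; split; intros; try lra; try discriminate.
Qed.

Lemma Qp_bound f p : rsum (fun j => if Nat.leb 1 j then b2R (f j) else 0) p <= INR (p - 1) /\
  (INR (p - 1) <= rsum (fun j => if Nat.leb 1 j then b2R (f j) else 0) p <->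
   forall j, (1 <= j < p)%nat -> f j = true).
Proof.
  induction p.
  - simpl. split; [lra|]. split; intros; [lia|lra].
  - destruct IHp as [IH1 IH2]. cbn [rsum].
    destruct p.
    + simpl. split; [lra|]. split; intros; [lia|lra].
    + replace (S (S p) - 1)%nat with (S (S p - 1)) by lia. rewrite S_INR.
      replace (Nat.leb 1 (S p)) with true by reflexivity.
      generalize (b2R_01 (f (S p))); intro Hb.
      split; [lra|]. split.
      * intros H j Hj. destruct (Nat.eq_dec j (S p)).
        -- subst. destruct (f (S p)); auto. cbn [b2R] in H. lra.
        -- apply IH2; [|lia]. lra.
      * intros H. assert (f (S p) = true) as Hf by (apply H; lia).
        rewrite Hf. cbn [b2R].
        assert (INR (S p - 1) <= rsum (fun j => if Nat.leb 1 j then b2R (f j) else 0) (S p)).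
        { apply IH2. intros; apply H; lia. }
        lra.
Qed.

Lemma Q_restrict f i n : (i <= n)%nat ->
  rsum (fun j => if andb (Nat.leb 1 j) (Nat.ltb j i) then b2R (f j) else 0) n =
  rsum (fun j => if Nat.leb 1 j then b2R (f j) else 0) i.
Proof.
  induction n; intros H.
  - replace i with O by lia. reflexivity.
  - destruct (Nat.eq_dec i (S n)).
    + subst. apply rsum_ext. intros j Hj. rewrite (proj2 (Nat.ltb_lt j (S n)) Hj).
      rewrite andb_true_r. reflexivity.
    + cbn [rsum]. rewrite IHn by lia. rewrite (proj2 (Nat.ltb_ge n i)) by lia.
      rewrite andb_false_r. ring.
Qed.

Lemma stepH m K xs s c i : (c = 2 \/ c = 3)%nat -> (1 <= i <= m)%nat ->
  (st m K xs (S s) (iB c i) = true <->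
   st m K xs s (iB 1 0) = false /\ st m K xs s 2 = false /\
   forall j, (1 <= j < i)%nat -> st m K xs s (iB 0 j) = true).
Proof.
  intros Hc Hi.
  rewrite fire. rewrite role_iB.
  assert (Hl : andb (Nat.leb 1 i) (Nat.leb i m) = true).
  { apply andb_true_intro; split; apply Nat.leb_le; lia. }
  set (Q := rsum (fun j => if Nat.leb 1 j then b2R (st m K xs s (iB 0 j)) else 0) i).
  assert (HQ : blocksum m K xs s (blk c i) = Q - sv m K xs s (iB 1 0)).
  { unfold blocksum.
    rewrite (rsum_ext _ (fun j => (if andb (Nat.leb 1 j) (Nat.ltb j i) then b2R (st m K xs s (iB 0 j)) else 0)
                            + (if Nat.eqb j 0 then - sv m K xs s (iB 1 0) else 0))).
    rewrite rsum_plus, rsum_pt by lia. rewrite Q_restrict by lia. unfold Q. ring.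
    intros j _. destruct Hc as [-> | ->]; cbn [blk wr]; rewrite Hl;
    destruct (andb (Nat.leb 1 j) (Nat.ltb j i)); destruct j; cbn [Nat.eqb]; unfold sv; ring. }
  rewrite HQ.
  destruct (Qp_bound (fun j => st m K xs s (iB 0 j)) i) as [B1 B2]. fold Q in B1, B2.
  assert (Hw : forall r, (r = RHP i \/ r = RHQ i) -> wx r = 0 /\ wr m RA r = 0 /\ wr m RE r = 0 /\
     wr m RR r = -1 /\ wr m RS r = 0 /\ th K r = INR (i - 1)).
  { intros r [-> | ->]; cbn [wx wr th]; rewrite Hl; repeat split; reflexivity. }
  destruct (Hw (blk c i)) as (W1 & W2 & W3 & W4 & W5 & W6).
  { destruct Hc as [-> | ->]; [left|right]; reflexivity. }
  rewrite W1, W2, W3, W4, W5, W6. unfold sv.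
  generalize (b2R_01 (xs s)) (b2R_01 (st m K xs s 0)) (b2R_01 (st m K xs s 1)) (b2R_01 (st m K xs s 3)); intros X1 X2 X3 X4.
  split.
  - intros H.
    destruct (st m K xs s (iB 1 0)) eqn:E1; destruct (st m K xs s 2) eqn:E2; simpl in H; try lra.
    repeat split; auto. apply B2. lra.
  - intros (E1 & E2 & H3). rewrite E1, E2. simpl. apply B2 in H3. lra.
Qed.

Fixpoint allb (f : nat -> bool) (i : nat) : bool :=
  match i with O => true | S i' => allb f i' && f i' end.

Fixpoint cnt (k j : nat) : bool :=
  match k with O => false | S k' => xorb (cnt k' j) (allb (cnt k') j) end.

Lemma allb_spec f i : allb f i = true <-> forall j, (j < i)%nat -> f j = true.
Proof.
  induction i; simpl.
  - split; intros; [lia|auto].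
  - rewrite andb_true_iff, IHi. split.
    + intros [H1 H2] j Hj. destruct (Nat.eq_dec j i); [subst; auto|apply H1; lia].
    + intros H; split; [intros; apply H; lia| apply H; lia].
Qed.

Lemma allb_cntS k i : (1 <= i)%nat ->
  (allb (cnt (S k)) i = true <-> cnt k 0 = false /\ forall j, (1 <= j < i)%nat -> cnt k j = true).
Proof.
  intros Hi. rewrite allb_spec. cbn [cnt]. split.
  - intros H. assert (H0 := H O Hi). cbn [allb] in H0.
    destruct (cnt k 0) eqn:E; [simpl in H0; discriminate|]. split; auto.
    intros j Hj. specialize (H j ltac:(lia)).
    assert (Ha : allb (cnt k) j = false).
    { destruct (allb (cnt k) j) eqn:E2; auto. rewrite allb_spec in E2.
      rewrite (E2 O ltac:(lia)) in E. discriminate. }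
    rewrite Ha in H. destruct (cnt k j); auto.
  - intros [H0 H1] j Hj. destruct j as [|j].
    + cbn [allb]. rewrite H0. reflexivity.
    + assert (Ha : allb (cnt k) (S j) = false).
      { destruct (allb (cnt k) (S j)) eqn:E2; auto. rewrite allb_spec in E2.
        rewrite (E2 O ltac:(lia)) in H0. discriminate. }
      rewrite Ha. rewrite H1 by lia. reflexivity.
Qed.

Definition Inv m K xs s k :=
  (forall j, (j < m)%nat -> st m K xs s (iB 0 j) = cnt k j) /\
  st m K xs s (iB 1 0) = cnt k 0 /\
  (forall i, (1 <= i <= m)%nat -> st m K xs s (iB 2 i) = allb (cnt k) i /\ st m K xs s (iB 3 i) = allb (cnt k) i).

Lemma allb_cnt0 i : (1 <= i)%nat -> allb (cnt 0) i = false.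
Proof. intros. destruct i; [lia|]. simpl. apply andb_false_r. Qed.

Lemma H_false m K xs s c i : (c = 2 \/ c = 3)%nat -> (1 <= i <= m)%nat -> st m K xs s 2 = true ->
  st m K xs (S s) (iB c i) = false.
Proof.
  intros Hc Hi H. destruct (st m K xs (S s) (iB c i)) eqn:E; auto.
  apply stepH in E; auto. destruct E as (_ & E & _). congruence.
Qed.

Lemma inv_reset m K xs s : (1 <= m)%nat -> xs s = true -> Inv m K xs (S (S s)) 0.
Proof.
  intros Hm Hx. assert (HR : st m K xs (S s) 2 = true) by (rewrite stepR; auto).
  split; [|split].
  - intros j Hj. destruct j.
    + rewrite stepB0 by lia. rewrite HR. apply andb_false_r.
    + rewrite stepBj by lia. rewrite HR. reflexivity.
  - rewrite stepB0 by lia. rewrite HR. apply andb_false_r.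
  - intros i Hi. rewrite allb_cnt0 by lia. split; apply H_false; auto; lia.
Qed.

Lemma H_eq m K xs s c i k : (c = 2 \/ c = 3)%nat -> (1 <= i <= m)%nat -> Inv m K xs s k -> st m K xs s 2 = false ->
  st m K xs (S s) (iB c i) = allb (cnt (S k)) i.
Proof.
  intros Hc Hi [I1 [I2 I3]] HR. apply eq_iff_eq_true. rewrite stepH by auto. rewrite allb_cntS by lia.
  rewrite I2. split.
  - intros (A1 & _ & A3). split; auto. intros j Hj. rewrite <- I1 by lia. auto.
  - intros (A1 & A3). repeat split; auto. intros j Hj. rewrite I1 by lia. auto.
Qed.

Lemma inv_step m K xs s k : (1 <= m)%nat -> Inv m K xs s k -> st m K xs s 2 = false -> Inv m K xs (S s) (S k).
Proof.
  intros Hm I HR. pose proof I as [I1 [I2 I3]]. split; [|split].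
  - intros j Hj. destruct j.
    + rewrite stepB0 by lia. rewrite HR, I2. cbn [cnt allb]. destruct (cnt k 0); reflexivity.
    + rewrite stepBj by lia. rewrite HR.
      destruct (I3 (S (S j)) ltac:(lia)) as [_ ->].
      destruct (I3 (S j) ltac:(lia)) as [-> _].
      rewrite I1 by lia.
      change (cnt (S k) (S j)) with (xorb (cnt k (S j)) (allb (cnt k) (S j))).
      change (allb (cnt k) (S (S j))) with (allb (cnt k) (S j) && cnt k (S j)).
      destruct (allb (cnt k) (S j)), (cnt k (S j)); reflexivity.
  - rewrite stepB0 by lia. rewrite HR, I2. cbn [cnt allb]. destruct (cnt k 0); reflexivity.
  - intros i Hi. split; apply H_eq; auto.
Qed.

Lemma counter m K xs tau k : (1 <= m)%nat -> xs tau = true ->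
  (forall j, (tau < j <= tau + k)%nat -> xs j = false) -> Inv m K xs (tau + 2 + k) k.
Proof.
  intros Hm Hx. induction k; intros H.
  - replace (tau + 2 + 0)%nat with (S (S tau)) by lia. apply inv_reset; auto.
  - replace (tau + 2 + S k)%nat with (S (tau + 2 + k)) by lia.
    apply inv_step; auto. apply IHk. intros; apply H; lia.
    replace (tau + 2 + k)%nat with (S (tau + 1 + k)) by lia. rewrite stepR. apply H; lia.
Qed.

Lemma val_S m k : val m (cnt (S k)) = val m (cnt k) + 1 - 2 ^ m * b2R (allb (cnt k) m).
Proof.
  induction m.
  - unfold val. simpl. lra.
  - unfold val in *. cbn [rsum]. rewrite IHm. cbn [cnt allb pow].
    destruct (allb (cnt k) m), (cnt k m); simpl; lra.
Qed.

Lemma val_nonneg m f : 0 <= val m f.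
Proof. unfold val. induction m; simpl; [lra|]. generalize (b2R_01 (f m)) (pow2_pos m). nra. Qed.

Lemma val_le m f : val m f <= 2 ^ m - 1.
Proof. unfold val. induction m; simpl; [lra|]. generalize (b2R_01 (f m)) (pow2_pos m). nra. Qed.

Lemma INR_pow2 m : INR (2 ^ m) = 2 ^ m.
Proof. rewrite pow_INR. reflexivity. Qed.

Lemma val_cnt m k : (k < 2 ^ m)%nat -> val m (cnt k) = INR k.
Proof.
  induction k; intros H.
  - unfold val. rewrite (rsum_ext _ (fun _ => 0)) by (intros; simpl; ring). apply rsum_0.
  - rewrite val_S, IHk by lia. destruct (allb (cnt k) m) eqn:E.
    + exfalso. generalize (val_nonneg m (cnt (S k))). rewrite val_S, IHk by lia. rewrite E.
      apply lt_INR in H. rewrite INR_pow2 in H. rewrite S_INR in H. simpl b2R. lra.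
    + rewrite S_INR. simpl. ring.
Qed.

Lemma val_ext m f g : (forall j, (j < m)%nat -> f j = g j) -> val m f = val m g.
Proof. intros H. unfold val. apply rsum_ext. intros. rewrite H; auto. Qed.

Lemma stop_forced m K xs s : st m K xs s 2 = true -> st m K xs (S s) 3 = false.
Proof.
  intros HR. destruct (st m K xs (S s) 3) eqn:E; auto.
  apply stepS in E. unfold sv in E. rewrite HR in E. simpl b2R in E.
  generalize (val_le m (fun j => st m K xs s (iB 0 j))) (pos_INR K). lra.
Qed.

Lemma stop_inv m K xs s k : Inv m K xs s k -> st m K xs s 2 = false -> (k < 2 ^ m)%nat ->
  st m K xs (S s) 3 = Nat.leb K k.
Proof.
  intros [I1 _] HR Hk. apply eq_iff_eq_true. rewrite stepS. unfold sv. rewrite HR. simpl b2R.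
  rewrite (val_ext _ _ (cnt k)) by auto. rewrite val_cnt by auto.
  rewrite Nat.leb_le. split; intros H.
  - apply INR_le. lra.
  - apply le_INR in H. lra.
Qed.

Lemma last_x (xs : nat -> bool) s tp : (tp <= s)%nat -> xs tp = true ->
  exists tau, (tp <= tau <= s)%nat /\ xs tau = true /\ forall j, (tau < j <= s)%nat -> xs j = false.
Proof.
  induction s; intros H Hx.
  - exists O. replace tp with O in * by lia. repeat split; auto; intros; lia.
  - destruct (xs (S s)) eqn:E.
    + exists (S s). repeat split; auto; intros; lia.
    + destruct (Nat.eq_dec tp (S s)); [subst; congruence|].
      destruct IHs as (tau & H1 & H2 & H3); [lia|auto|].
      exists tau. repeat split; auto; try lia. intros j Hj.
      destruct (Nat.eq_dec j (S s)); [subst; auto|apply H3; lia].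
Qed.

Lemma st0 m K xs i : st m K xs 0 i = false.
Proof. reflexivity. Qed.

Lemma A_char m K t xs : (5 <= t)%nat -> K = (t - 4)%nat -> (1 <= m)%nat -> (t < 2 ^ m)%nat ->
  forall s, st m K xs s 0 = true <-> exists tp, (S s - t <= tp)%nat /\ (tp < s)%nat /\ xs tp = true.
Proof.
  intros Ht HK Hm Hmt. induction s.
  - rewrite st0. split; [discriminate|]. intros (tp & _ & H & _). lia.
  - rewrite stepA. destruct (xs s) eqn:Ex.
    + cbn [orb andb negb]. split; auto. intros _. exists s. repeat split; auto; lia.
    + destruct (st m K xs s 1) eqn:Ee.
      * destruct s as [|s0]; [rewrite st0 in Ee; discriminate|].
        rewrite stepE in Ee. cbn [orb andb negb]. split; auto. intros _. exists s0. repeat split; auto; lia.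
      * cbn [orb andb negb]. destruct s as [|s0].
        { rewrite st0. cbn [orb andb negb]. split; [discriminate|]. intros (tp & _ & H & H'). 
          replace tp with O in * by lia. congruence. }
        rewrite stepE in Ee.
        rewrite andb_true_iff, negb_true_iff. split.
        -- intros [HA HS]. apply IHs in HA. destruct HA as (tp & H1 & H2 & H3).
           destruct (last_x xs (S s0) tp) as (tau & T1 & T2 & T3); [lia|auto|].
           assert (tau <> S s0) by (intro; subst; congruence).
           assert (tau <> s0) by (intro; subst; congruence).
           destruct (le_lt_dec (S (S (S s0)) - t) tau) as [Hle|Hlt].
           ++ exists tau. repeat split; auto; lia.
           ++ exfalso. assert (Hs0 : s0 = (tau + 2 + K)%nat) by lia.
              assert (HI : Inv m K xs s0 K).
              { rewrite Hs0. apply counter; auto. intros j Hj; apply T3; lia. }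
              assert (HR : st m K xs s0 2 = false).
              { rewrite Hs0. replace (tau + 2 + K)%nat with (S (tau + 1 + K)) by lia.
                rewrite stepR. apply T3; lia. }
              rewrite (stop_inv m K xs s0 K HI HR) in HS by lia.
              rewrite Nat.leb_refl in HS. discriminate.
        -- intros (tp & H1 & H2 & H3).
           assert (tp <> S s0) by (intro; subst; congruence).
           split.
           ++ apply IHs. exists tp. repeat split; auto; lia.
           ++ destruct (last_x xs (S s0) tp) as (tau & T1 & T2 & T3); [lia|auto|].
              assert (tau <> S s0) by (intro; subst; congruence).
              assert (tau <> s0) by (intro; subst; congruence).
              destruct s0 as [|s1]; [lia|].
              destruct (Nat.eq_dec tau s1).
              ** subst. apply stop_forced. rewrite stepR. auto.
              ** set (k := (S s1 - tau - 2)%nat).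
                 assert (Hs : S s1 = (tau + 2 + k)%nat) by (unfold k; lia).
                 assert (HI : Inv m K xs (S s1) k).
                 { rewrite Hs. apply counter; auto. intros j Hj; apply T3; lia. }
                 assert (HR : st m K xs (S s1) 2 = false).
                 { rewrite stepR. apply T3; lia. }
                 rewrite (stop_inv m K xs (S s1) k HI HR) by (unfold k; lia).
                 apply Nat.leb_gt. unfold k. lia.
Qed.

Lemma net_timer m t : (5 <= t)%nat -> (1 <= m)%nat -> (t < 2 ^ m)%nat -> is_timer (net m (t - 4)) t.
Proof.
  intros Ht Hm Hmt. split; [apply net_wf|].
  intros xs s. destruct s as [|s].
  - change (state (net m (t - 4)) xs 0 NY) with false. split; [discriminate|]. intros (tp & _ & H & _). lia.
  - rewrite stepY. destruct (xs s) eqn:Ex.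
    + cbn [orb andb negb]. split; auto. intros _. exists s. repeat split; auto; lia.
    + cbn [orb andb negb]. rewrite (A_char m (t - 4) t xs Ht eq_refl Hm Hmt s). split.
      * intros (tp & H1 & H2 & H3). exists tp. repeat split; auto; lia.
      * intros (tp & H1 & H2 & H3). assert (tp <> s) by (intro; subst; congruence).
        exists tp. repeat split; auto; lia.
Qed.

Lemma ln_le' x y : 0 < x -> x <= y -> ln x <= ln y.
Proof. intros H1 H2. destruct H2 as [H2|H2]; [left; apply ln_increasing; auto|subst; lra]. Qed.

Lemma ln2_lt1 : ln 2 < 1.
Proof.
  rewrite <- (ln_exp 1). apply ln_increasing; [lra|].
  generalize (exp_ineq1 1 ltac:(lra)). lra.
Qed.

Lemma part1 : exists (c : R) (t0 : nat), 0 < c /\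
     forall t : nat, (0 < t)%nat -> (t0 <= t)%nat ->
       exists N : network, is_timer N t /\ INR (aux_count N) <= c * ln (INR t).
Proof.
  exists 20, 8%nat. split; [lra|]. intros t Ht0 Ht.
  destruct (Nat.log2_spec t Ht0) as [L1 L2].
  set (L := Nat.log2 t) in *.
  exists (net (S L) (t - 4)). split.
  - apply net_timer; lia.
  - cbn [aux_count net].
    replace (4 + 4 * S (S L))%nat with (12 + 4 * L)%nat by lia.
    rewrite plus_INR, mult_INR. 
    assert (Hl : INR L * ln 2 <= ln (INR t)).
    { rewrite <- ln_pow by lra. apply ln_le'. apply pow_lt; lra.
      rewrite <- INR_pow2. apply le_INR. auto. }
    assert (H1 : 1 <= ln (INR t)).
    { rewrite <- (ln_exp 1). apply ln_le'. apply exp_pos.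
      generalize exp_le_3. apply le_INR in Ht. simpl in Ht. intros. lra. }
    generalize ln_lt_2. intros. generalize (pos_INR L). intros.
    replace (INR 12) with 12 by (simpl; lra). replace (INR 4) with 4 by (simpl; lra).
    nra.
Qed.

Fixpoint allbl (k : nat) : list (list bool) :=
  match k with O => [[]] | S k => map (cons true) (allbl k) ++ map (cons false) (allbl k) end.

Lemma allbl_len k : length (allbl k) = (2 ^ k)%nat.
Proof. induction k; simpl; auto. rewrite length_app, !length_map, IHk. lia. Qed.

Lemma allbl_in l : In l (allbl (length l)).
Proof.
  induction l as [|b l IH]; simpl; auto.
  apply in_or_app. destruct b; [left|right]; apply in_map; auto.
Qed.

Lemma map_eq_in {A B} (f g : A -> B) l : map f l = map g l -> forall a, In a l -> f a = g a.
Proof.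
  induction l; simpl; intros H a0 Ha; [contradiction|].
  injection H as H1 H2. destruct Ha; [subst; auto|auto].
Qed.

Lemma det N xs i j : (forall d, xs (i + d)%nat = xs (j + d)%nat) ->
  (forall u, In u (neurons N) -> state N xs i u = state N xs j u) ->
  forall d u, In u (neurons N) -> state N xs (i + d) u = state N xs (j + d) u.
Proof.
  intros Hx H0 d. induction d; intros u Hu.
  - rewrite !Nat.add_0_r. auto.
  - replace (i + S d)%nat with (S (i + d)) by lia.
    replace (j + S d)%nat with (S (j + d)) by lia.
    destruct u as [| |k].
    + rewrite !state_NX. replace (S (i + d)) with (i + S d)%nat by lia.
      replace (S (j + d)) with (j + S d)%nat by lia. auto.
    + rewrite !state_S by discriminate. erewrite map_ext_in. reflexivity.
      intros v Hv. simpl. rewrite IHd; auto.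
    + rewrite !state_S by discriminate. erewrite map_ext_in. reflexivity.
      intros v Hv. simpl. rewrite IHd; auto.
Qed.

Lemma part2 : exists (c : R) (t0 : nat), 0 < c /\
     forall t : nat, (0 < t)%nat -> (t0 <= t)%nat ->
       forall N : network, is_timer N t -> c * ln (INR t) <= INR (aux_count N).
Proof.
  exists (1/2), 2%nat. split; [lra|]. intros t Ht0 Ht N [_ HT].
  set (n := aux_count N).
  set (xs := fun k => Nat.eqb k 0).
  assert (HY : forall s, state N xs s NY = true <-> (1 <= s <= t)%nat).
  { intros s. rewrite HT. split.
    - intros (tp & H1 & H2 & H3). unfold xs in H3. apply Nat.eqb_eq in H3. lia.
    - intros H. exists O. repeat split; try lia. }
  set (sg := fun s => map (fun u => state N xs s u) (NY :: map Aux (seq 0 n))).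
  assert (Hinj : forall i j, (1 <= i)%nat -> (i < j <= t + 1)%nat -> sg i <> sg j).
  { intros i j Hi Hj Heq.
    assert (Hall : forall u, In u (neurons N) -> state N xs i u = state N xs j u).
    { intros u Hu. unfold neurons in Hu. destruct Hu as [<-|Hu].
      - rewrite !state_NX. unfold xs. destruct i; [lia|]. destruct j; [lia|]. reflexivity.
      - apply (map_eq_in _ _ _ Heq). exact Hu. }
    assert (Hxs : forall d, xs (i + d)%nat = xs (j + d)%nat).
    { intros d. unfold xs. destruct (i + d)%nat eqn:E1; [lia|]. destruct (j + d)%nat eqn:E2; [lia|]. reflexivity. }
    pose proof (det N xs i j Hxs Hall (t + 1 - j)%nat NY ltac:(simpl; auto)) as D.
    replace (j + (t + 1 - j))%nat with (S t) in D by lia.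
    assert (state N xs (i + (t + 1 - j)) NY = true) as E by (apply HY; lia).
    assert (state N xs (S t) NY = false) as F.
    { destruct (state N xs (S t) NY) eqn:G; auto. apply HY in G. lia. }
    congruence. }
  assert (HND : NoDup (map sg (seq 1 (t + 1)))).
  { apply NoDup_map_NoDup_ForallPairs; [|apply seq_NoDup].
    intros a b Ha Hb Hab. apply in_seq in Ha, Hb.
    destruct (Nat.lt_total a b) as [H|[H|H]]; auto.
    - exfalso. apply (Hinj a b); auto; lia.
    - exfalso. apply (Hinj b a); auto; lia. }
  assert (Hinc : incl (map sg (seq 1 (t + 1))) (allbl (S n))).
  { intros l Hl. apply in_map_iff in Hl. destruct Hl as (s & <- & _).
    assert (length (sg s) = S n) as <-.
    { unfold sg. simpl. rewrite !length_map, length_seq. auto. }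
    apply allbl_in. }
  pose proof (NoDup_incl_length HND Hinc) as Hlen.
  rewrite length_map, length_seq, allbl_len in Hlen.
  assert (Hn : (1 <= n)%nat).
  { clearbody n. destruct n as [|n']; [|lia]. simpl in Hlen. lia. }
  apply le_INR in Hlen. rewrite INR_pow2 in Hlen.
  assert (Hl : ln (INR t) < INR (S n) * ln 2).
  { rewrite <- ln_pow by lra. apply ln_increasing.
    apply lt_0_INR; lia. rewrite plus_INR in Hlen. change (INR 1) with 1 in Hlen. lra. }
  generalize ln2_lt1 ln_lt_2. intros. rewrite S_INR in Hl.
  apply le_INR in Hn. simpl in Hn. nra.
Qed.

Theorem theorem1 :
  (* (1) upper bound: O(log t) gates suffice *)
  (exists (c : R) (t0 : nat), 0 < c /\
     forall t : nat, (0 < t)%nat -> (t0 <= t)%nat ->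
       exists N : network, is_timer N t /\ INR (aux_count N) <= c * ln (INR t)) /\
  (* (2) lower bound: Omega(log t) neurons are necessary *)
  (exists (c : R) (t0 : nat), 0 < c /\
     forall t : nat, (0 < t)%nat -> (t0 <= t)%nat ->
       forall N : network, is_timer N t -> c * ln (INR t) <= INR (aux_count N)).
Proof.
  split; [exact part1 | exact part2].
Qed.
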